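(* For one-variable functions $f,g,b$ consider the lattice equation $$(\ast)\qquad u_{,t}=b\bigl(-f(u-u_{-2})+g(u_{-1}-u)-g(u-u_1)\bigr)+b\bigl(-f(u_2-u)-g(u_{-1}-u)+g(u-u_1)\bigr).$$ For the following choices (with $\gamma$ a nonzero constant), equation $(\ast)$ is point equivalent (related by an invertible change of dependent variable $\tilde u(n)=\phi(u(n))$ applied at every site, such as $e^u\mapsto u$ or an affine rescaling, together with a constant rescaling of $t$) to the indicated equation: Case (A): $f(x)=-2\gamma/x$, $g(x)=\gamma/x$, $b(x)=1/x$; equivalent to $$\tfrac12u_{,t}=\frac{1}{\frac{2}{u_2-u}+\frac{1}{u-u_1}+\frac{1}{u-u_{-1}}}-\frac{1}{\frac{2}{u_{-2}-u}+\frac{1}{u-u_1}+\frac{1}{u-u_{-1}}}.$$ Case (C): $f(x)=\log\frac{x-2\gamma}{x+2\gamma}$, $g(x)=\log\frac{x+\gamma}{x-\gamma}$, $b(x)=\frac1{e^x-1}$; equivalent to $$\tfrac14u_{,t}=\frac{1}{\frac{(u_2-u+2)(u_1-u-1)(u_{-1}-u-1)}{(u_2-u-2)(u_1-u+1)(u_{-1}-u+1)}-1}+\frac{1}{\frac{(u_{-2}-u-2)(u_1-u+1)(u_{-1}-u+1)}{(u_{-2}-u+2)(u_1-u-1)(u_{-1}-u-1)}-1}.$$ Case (D): $f(x)=-\log(1+1/x)$, $g(x)=\log x$, $b(x)=\frac1{e^x+1}$; equivalent to $$u_{,t}=\frac{u-u_{-1}}{u_1-u_{-1}+\frac{u-u_1}{u-u_2}}-\frac{u-u_1}{u_1-u_{-1}+\frac{u-u_{-1}}{u-u_{-2}}}.$$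 Case (F): $f(x)=\log(e^{-x}-1)$, $g(x)=\log(e^x-1)$, $b(x)=e^{-x}$; equivalent to $$u_{,t}=u\frac{(1-\frac{u}{u_2})(1-\frac{u_{-1}}{u})}{1-\frac{u}{u_1}}+u\frac{(1-\frac{u_{-2}}{u})(1-\frac{u}{u_1})}{1-\frac{u_{-1}}{u}}.$$ Case (H) at parameter $0$: $f(x)=\log(e^{-x}-1)$, $g(x)=\log(e^x+1)$, $b(x)=e^{-x}$; equivalent to $$u_{,t}=u\frac{(1-\frac{u}{u_2})(1+\frac{u_{-1}}{u})}{1+\frac{u}{u_1}}+u\frac{(1-\frac{u_{-2}}{u})(1+\frac{u}{u_1})}{1+\frac{u_{-1}}{u}}.$$ Case (I): $f(x)=\log\frac{\gamma^{-2}e^x-1}{e^x-\gamma^{-2}}$, $g(x)=\log\frac{\gamma e^x-1}{e^x-\gamma}$, $b(x)=\frac1{e^x-1}$; equivalent to $$-\frac{1}{1+\gamma^2}u_{,t}=\frac{(u-\gamma u_{-1})(u-\gamma u_1)(u-\gamma^{-2}u_2)}{(\gamma u_{-1}-u)(\gamma u_1-u_2)-(\gamma u-u_1)(u_{-1}-\gamma u_2)}-\frac{(u-\gamma^{-1}u_{-1})(u-\gamma^{-1}u_1)(u-\gamma^2u_{-2})}{(\gamma u_{-2}-u_{-1})(\gamma u-u_1)-(\gamma u_{-1}-u)(u_{-2}-\gamma u_1)}.$$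
   Context: Here $u=u(n,t)$, $n\in\mathbb Z$, $u_m=u(n+m,t)$, and $u_{,t}=\partial u/\partial t$. Equation $(\ast)$ is the scalar second-order lattice equation obtained from the sum of two commuting continuous symmetries of a shift-invariant 7-point equation on the triangular lattice. *)

(* Defs.v *)
From Stdlib Require Import Reals ZArith.
From Coquelicot Require Import Coquelicot.
Open Scope R_scope.

(** A scalar lattice equation  k * u_{,t} = F(u_{-2},u_{-1},u,u_1,u_2),
    where F is defined on the set D of 5-tuples (u_{-2},u_{-1},u,u_1,u_2). *)
Definition dom5 := R -> R -> R -> R -> R -> Prop.
Definition rhs5 := R -> R -> R -> R -> R -> R.

Definition sat_at (D : dom5) (k : R) (F : rhs5) (u : Z -> R -> R) (n : Z) (t : R)
  : Prop :=
  D (u (n - 2)%Z t) (u (n - 1)%Z t) (u n t) (u (n + 1)%Z t) (u (n + 2)%Z t) /\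
  exists d : R, is_derive (fun s => u n s) t d /\
    k * d = F (u (n - 2)%Z t) (u (n - 1)%Z t) (u n t) (u (n + 1)%Z t) (u (n + 2)%Z t).

Definition point_equiv (D1 : dom5) (k1 : R) (F1 : rhs5)
                       (D2 : dom5) (k2 : R) (F2 : rhs5) : Prop :=
  exists (phi : R -> R) (c : R),
    c <> 0 /\
    (forall x y, phi x = phi y -> x = y) /\
    (forall x, exists d, is_derive phi x d /\ d <> 0) /\
    (forall (u : Z -> R -> R) (n : Z) (t : R),
        sat_at D1 k1 F1 u n t ->
        sat_at D2 k2 F2 (fun m s => phi (u m (c * s))) n (t / c)).

Definition star_rhs (f g b : R -> R) : rhs5 :=
  fun um2 um1 u u1 u2 =>
    b (- f (u - um2) + g (um1 - u) - g (u - u1)) +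
    b (- f (u2 - u) - g (um1 - u) + g (u - u1)).

Definition star_dom (f g : R -> R) (Df Dg Db : R -> Prop) : dom5 :=
  fun um2 um1 u u1 u2 =>
    Df (u - um2) /\ Df (u2 - u) /\ Dg (um1 - u) /\ Dg (u - u1) /\
    Db (- f (u - um2) + g (um1 - u) - g (u - u1)) /\
    Db (- f (u2 - u) - g (um1 - u) + g (u - u1)).

Definition fA (gam : R) (x : R) := - 2 * gam / x.
Definition gA (gam : R) (x : R) := gam / x.
Definition bA (x : R) := 1 / x.
Definition DA (x : R) : Prop := x <> 0.

Definition tgtA_rhs : rhs5 := fun um2 um1 u u1 u2 =>
  1 / (2 / (u2 - u) + 1 / (u - u1) + 1 / (u - um1))
  - 1 / (2 / (um2 - u) + 1 / (u - u1) + 1 / (u - um1)).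
Definition tgtA_dom : dom5 := fun um2 um1 u u1 u2 =>
  u2 - u <> 0 /\ um2 - u <> 0 /\ u - u1 <> 0 /\ u - um1 <> 0 /\
  2 / (u2 - u) + 1 / (u - u1) + 1 / (u - um1) <> 0 /\
  2 / (um2 - u) + 1 / (u - u1) + 1 / (u - um1) <> 0.

Definition fC (gam : R) (x : R) := ln ((x - 2 * gam) / (x + 2 * gam)).
Definition DfC (gam : R) (x : R) : Prop :=
  x + 2 * gam <> 0 /\ 0 < (x - 2 * gam) / (x + 2 * gam).
Definition gC (gam : R) (x : R) := ln ((x + gam) / (x - gam)).
Definition DgC (gam : R) (x : R) : Prop :=
  x - gam <> 0 /\ 0 < (x + gam) / (x - gam).
Definition bC (x : R) := 1 / (exp x - 1).
Definition DbC (x : R) : Prop := exp x - 1 <> 0.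

Definition tgtC_N1 um1 u u1 u2 := (u2 - u + 2) * (u1 - u - 1) * (um1 - u - 1).
Definition tgtC_D1 um1 u u1 u2 := (u2 - u - 2) * (u1 - u + 1) * (um1 - u + 1).
Definition tgtC_N2 um2 um1 u u1 := (um2 - u - 2) * (u1 - u + 1) * (um1 - u + 1).
Definition tgtC_D2 um2 um1 u u1 := (um2 - u + 2) * (u1 - u - 1) * (um1 - u - 1).
Definition tgtC_rhs : rhs5 := fun um2 um1 u u1 u2 =>
  1 / (tgtC_N1 um1 u u1 u2 / tgtC_D1 um1 u u1 u2 - 1)
  + 1 / (tgtC_N2 um2 um1 u u1 / tgtC_D2 um2 um1 u u1 - 1).
Definition tgtC_dom : dom5 := fun um2 um1 u u1 u2 =>
  tgtC_D1 um1 u u1 u2 <> 0 /\ tgtC_D2 um2 um1 u u1 <> 0 /\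
  tgtC_N1 um1 u u1 u2 / tgtC_D1 um1 u u1 u2 - 1 <> 0 /\
  tgtC_N2 um2 um1 u u1 / tgtC_D2 um2 um1 u u1 - 1 <> 0.

Definition fD (x : R) := - ln (1 + 1 / x).
Definition DfD (x : R) : Prop := x <> 0 /\ 0 < 1 + 1 / x.
Definition gD (x : R) := ln x.
Definition DgD (x : R) : Prop := 0 < x.
Definition bD (x : R) := 1 / (exp x + 1).
Definition DbD (x : R) : Prop := True.

Definition tgtD_rhs : rhs5 := fun um2 um1 u u1 u2 =>
  (u - um1) / (u1 - um1 + (u - u1) / (u - u2))
  - (u - u1) / (u1 - um1 + (u - um1) / (u - um2)).
Definition tgtD_dom : dom5 := fun um2 um1 u u1 u2 =>
  u - u2 <> 0 /\ u - um2 <> 0 /\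
  u1 - um1 + (u - u1) / (u - u2) <> 0 /\
  u1 - um1 + (u - um1) / (u - um2) <> 0.

Definition fF (x : R) := ln (exp (- x) - 1).
Definition DfF (x : R) : Prop := 0 < exp (- x) - 1.
Definition gF (x : R) := ln (exp x - 1).
Definition DgF (x : R) : Prop := 0 < exp x - 1.
Definition bF (x : R) := exp (- x).
Definition DbF (x : R) : Prop := True.

Definition tgtF_rhs : rhs5 := fun um2 um1 u u1 u2 =>
  u * ((1 - u / u2) * (1 - um1 / u)) / (1 - u / u1)
  + u * ((1 - um2 / u) * (1 - u / u1)) / (1 - um1 / u).
Definition tgtF_dom : dom5 := fun um2 um1 u u1 u2 =>
  u2 <> 0 /\ u <> 0 /\ u1 <> 0 /\ 1 - u / u1 <> 0 /\ 1 - um1 / u <> 0.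

Definition fH (x : R) := ln (exp (- x) - 1).
Definition DfH (x : R) : Prop := 0 < exp (- x) - 1.
Definition gH (x : R) := ln (exp x + 1).
Definition DgH (x : R) : Prop := 0 < exp x + 1.
Definition bH (x : R) := exp (- x).
Definition DbH (x : R) : Prop := True.

Definition tgtH_rhs : rhs5 := fun um2 um1 u u1 u2 =>
  u * ((1 - u / u2) * (1 + um1 / u)) / (1 + u / u1)
  + u * ((1 - um2 / u) * (1 + u / u1)) / (1 + um1 / u).
Definition tgtH_dom : dom5 := fun um2 um1 u u1 u2 =>
  u2 <> 0 /\ u <> 0 /\ u1 <> 0 /\ 1 + u / u1 <> 0 /\ 1 + um1 / u <> 0.

Definition fI (gam : R) (x : R) :=
  ln ((/ gam ^ 2 * exp x - 1) / (exp x - / gam ^ 2)).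
Definition DfI (gam : R) (x : R) : Prop :=
  exp x - / gam ^ 2 <> 0 /\ 0 < (/ gam ^ 2 * exp x - 1) / (exp x - / gam ^ 2).
Definition gI (gam : R) (x : R) := ln ((gam * exp x - 1) / (exp x - gam)).
Definition DgI (gam : R) (x : R) : Prop :=
  exp x - gam <> 0 /\ 0 < (gam * exp x - 1) / (exp x - gam).
Definition bI (x : R) := 1 / (exp x - 1).
Definition DbI (x : R) : Prop := exp x - 1 <> 0.

Definition tgtI_den1 (gam : R) um1 u u1 u2 :=
  (gam * um1 - u) * (gam * u1 - u2) - (gam * u - u1) * (um1 - gam * u2).
Definition tgtI_den2 (gam : R) um2 um1 u u1 :=
  (gam * um2 - um1) * (gam * u - u1) - (gam * um1 - u) * (um2 - gam * u1).
Definition tgtI_rhs (gam : R) : rhs5 := fun um2 um1 u u1 u2 =>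
  (u - gam * um1) * (u - gam * u1) * (u - / gam ^ 2 * u2) / tgtI_den1 gam um1 u u1 u2
  - (u - / gam * um1) * (u - / gam * u1) * (u - gam ^ 2 * um2) / tgtI_den2 gam um2 um1 u u1.
Definition tgtI_dom (gam : R) : dom5 := fun um2 um1 u u1 u2 =>
  tgtI_den1 gam um1 u u1 u2 <> 0 /\ tgtI_den2 gam um2 um1 u u1 <> 0.

(* Main.v *)
Require Import Defs.
From Stdlib Require Import Reals ZArith Lra.
From Coquelicot Require Import Coquelicot.
Open Scope R_scope.

Lemma pe_gen (D1 D2: dom5) (F1 F2: rhs5) k2 (phi phi': R->R) c :
 c <> 0 -> (forall x y, phi x = phi y -> x = y) ->
 (forall x, is_derive phi x (phi' x)) -> (forall x, phi' x <> 0) ->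
 (forall a b x y z, D1 a b x y z -> D2 (phi a) (phi b) (phi x) (phi y) (phi z) /\
    F2 (phi a) (phi b) (phi x) (phi y) (phi z) = k2 * (phi' x * c) * F1 a b x y z) ->
 point_equiv D1 1 F1 D2 k2 F2.
Proof.
  intros Hc Hinj Hd Hnz H.
  exists phi, c. split; [exact Hc|]. split; [exact Hinj|]. split.
  { intros x; exists (phi' x); auto. }
  intros u n t [HD [d [Hder Heq]]].
  unfold sat_at. simpl.
  replace (c * (t / c)) with t by (field; exact Hc).
  destruct (H _ _ _ _ _ HD) as [HD2 HF]. split; [exact HD2|].
  exists (phi' (u n t) * (c * d)). split.
  - replace (phi' (u n t) * (c * d)) with (scal (c * d) (phi' (u n t)))
      by (unfold scal; simpl; unfold mult; simpl; ring).
    apply (is_derive_comp phi (fun s => u n (c * s)) (t / c) (phi' (u n t)) (c * d)).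
    + replace (c * (t / c)) with t by (field; exact Hc). apply Hd.
    + apply (is_derive_comp (u n) (fun s => c * s) (t/c) d c).
      * replace (c * (t / c)) with t by (field; exact Hc). exact Hder.
      * auto_derive; [exact I| ring].
  - rewrite HF. rewrite <- Heq. ring.
Qed.

Ltac nz1 := match goal with |- ?a <> 0 => let Hc := fresh in intro Hc;
   match goal with H: ?b <> 0 |- _ => apply H; clear - Hc; lra end end.
Ltac nz := repeat split; repeat (apply Rmult_integral_contrapositive_currified); try nz1.

Lemma expA p q r : exp (- p + q - r) = / exp p * exp q / exp r.
Proof. unfold Rminus, Rdiv. rewrite !exp_plus, !exp_Ropp. ring. Qed.
Lemma expB p q r : exp (- p - q + r) = / exp p / exp q * exp r.
Proof. unfold Rminus, Rdiv. rewrite !exp_plus, !exp_Ropp. ring. Qed.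
Lemma divnum p q : 0 < p / q -> p <> 0.
Proof. intros H Hc. rewrite Hc in H. unfold Rdiv in H. rewrite Rmult_0_l in H. lra. Qed.

Ltac scl g H s := match goal with |- ?e' <> 0 => let Hc := fresh in intro Hc; apply H;
   transitivity (s * g * e'); [field; auto | rewrite Hc; ring] end.

Lemma caseC gam : gam <> 0 ->
  point_equiv (star_dom (fC gam) (gC gam) (DfC gam) (DgC gam) DbC) 1
              (star_rhs (fC gam) (gC gam) bC)
              tgtC_dom (1 / 4) tgtC_rhs.
Proof.
  intro Hg.
  apply (pe_gen _ _ _ _ _ (fun x => x / gam) (fun _ => / gam) (4 * gam)).
  - nz.
  - intros x y H. apply (Rmult_eq_reg_l (/ gam)); [|apply Rinv_neq_0_compat; auto].
    rewrite !(Rmult_comm (/ gam)). exact H.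
  - intros; auto_derive; auto. field; auto.
  - intros; apply Rinv_neq_0_compat; auto.
  - intros a b x y z HD. unfold star_dom, DfC, DgC, DbC in HD.
    destruct HD as ((h1a&h1b)&(h2a&h2b)&(h3a&h3b)&(h4a&h4b)&h5&h6).
    pose proof (divnum _ _ h1b) as h1c. pose proof (divnum _ _ h2b) as h2c.
    pose proof (divnum _ _ h3b) as h3c. pose proof (divnum _ _ h4b) as h4c.
    assert (k1 : a / gam - x / gam + 2 <> 0) by scl gam h1c (-1).
    assert (k2 : a / gam - x / gam - 2 <> 0) by scl gam h1a (-1).
    assert (k3 : z / gam - x / gam + 2 <> 0) by scl gam h2a 1.
    assert (k4 : z / gam - x / gam - 2 <> 0) by scl gam h2c 1.
    assert (k5 : b / gam - x / gam + 1 <> 0) by scl gam h3c 1.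
    assert (k6 : b / gam - x / gam - 1 <> 0) by scl gam h3a 1.
    assert (k7 : y / gam - x / gam + 1 <> 0) by scl gam h4a (-1).
    assert (k8 : y / gam - x / gam - 1 <> 0) by scl gam h4c (-1).
    assert (E1 : exp (- fC gam (x - a) + gC gam (b - x) - gC gam (x - y)) =
       tgtC_N2 (a / gam) (b / gam) (x / gam) (y / gam) / tgtC_D2 (a / gam) (b / gam) (x / gam) (y / gam)).
    { rewrite expA. unfold fC, gC. rewrite !exp_ln by auto.
      unfold tgtC_N2, tgtC_D2. field. nz. }
    assert (E2 : exp (- fC gam (z - x) - gC gam (b - x) + gC gam (x - y)) =
       tgtC_N1 (b / gam) (x / gam) (y / gam) (z / gam) / tgtC_D1 (b / gam) (x / gam) (y / gam) (z / gam)).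
    { rewrite expB. unfold fC, gC. rewrite !exp_ln by auto.
      unfold tgtC_N1, tgtC_D1. field. nz. }
    rewrite E1 in h5. rewrite E2 in h6.
    split.
    + unfold tgtC_dom. unfold tgtC_N1, tgtC_N2, tgtC_D1, tgtC_D2 in *. nz.
    + unfold star_rhs, tgtC_rhs, bC. rewrite E1, E2.
      set (Q1 := tgtC_N1 (b / gam) (x / gam) (y / gam) (z / gam) / tgtC_D1 (b / gam) (x / gam) (y / gam) (z / gam)) in *.
      set (Q2 := tgtC_N2 (a / gam) (b / gam) (x / gam) (y / gam) / tgtC_D2 (a / gam) (b / gam) (x / gam) (y / gam)) in *.
      clearbody Q1 Q2. field. nz.
Qed.

Lemma caseA gam : gam <> 0 ->
  point_equiv (star_dom (fA gam) (gA gam) DA DA DA) 1 (star_rhs (fA gam) (gA gam) bA)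
              tgtA_dom (1 / 2) tgtA_rhs.
Proof.
  intro Hg.
  apply (pe_gen _ _ _ _ _ (fun x => x) (fun _ => 1) (2 * gam)).
  - nz.
  - auto.
  - intros; auto_derive; auto.
  - intros; lra.
  - intros a b x y z HD. unfold star_dom, DA in HD.
    destruct HD as (h1&h2&h3&h4&h5&h6).
    assert (N1 : 2 / (a - x) + 1 / (x - y) + 1 / (x - b) <> 0).
    { intro Hc; apply h5. transitivity (- gam * (2 / (a - x) + 1 / (x - y) + 1 / (x - b))).
      unfold fA, gA; field; nz. rewrite Hc; ring. }
    assert (N2 : 2 / (z - x) + 1 / (x - y) + 1 / (x - b) <> 0).
    { intro Hc; apply h6. transitivity (gam * (2 / (z - x) + 1 / (x - y) + 1 / (x - b))).
      unfold fA, gA; field; nz. rewrite Hc; ring. }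
    split.
    + unfold tgtA_dom. nz.
    + unfold star_rhs, tgtA_rhs.
      replace (- fA gam (x - a) + gA gam (b - x) - gA gam (x - y))
        with (- gam * (2 / (a - x) + 1 / (x - y) + 1 / (x - b))) by (unfold fA, gA; field; nz).
      replace (- fA gam (z - x) - gA gam (b - x) + gA gam (x - y))
        with (gam * (2 / (z - x) + 1 / (x - y) + 1 / (x - b))) by (unfold fA, gA; field; nz).
      unfold bA.
      set (S1 := 2 / (a - x) + 1 / (x - y) + 1 / (x - b)) in *.
      set (S2 := 2 / (z - x) + 1 / (x - y) + 1 / (x - b)) in *.
      clearbody S1 S2. field; nz.
Qed.

Lemma caseD :
  point_equiv (star_dom fD gD DfD DgD DbD) 1 (star_rhs fD gD bD)
              tgtD_dom 1 tgtD_rhs.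
Proof.
  apply (pe_gen _ _ _ _ _ (fun x => x) (fun _ => 1) 1).
  - lra.
  - auto.
  - intros; auto_derive; auto.
  - intros; lra.
  - intros a b x y z HD. unfold star_dom, DfD, DgD, DbD in HD.
    destruct HD as ((h1a&h1b)&(h2a&h2b)&h3&h4&_&_).
    assert (efD : forall p, 0 < 1 + 1 / p -> exp (fD p) = / (1 + 1 / p)).
    { intros p Hp. unfold fD. rewrite exp_Ropp, exp_ln; auto. }
    assert (h3' : b - x <> 0) by lra. assert (h4' : x - y <> 0) by lra.
    assert (r1 : x - a + 1 <> 0).
    { apply (divnum _ (x - a)). replace ((x - a + 1) / (x - a)) with (1 + 1 / (x - a)) by (field; auto). auto. }
    assert (r2 : z - x + 1 <> 0).
    { apply (divnum _ (z - x)). replace ((z - x + 1) / (z - x)) with (1 + 1 / (z - x)) by (field; auto). auto. }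
    assert (q1 : 1 + 1 / (x - a) <> 0) by lra. assert (q2 : 1 + 1 / (z - x) <> 0) by lra.
    assert (E1 : exp (- fD (x - a) + gD (b - x) - gD (x - y)) =
                 (1 + 1 / (x - a)) * (b - x) / (x - y)).
    { rewrite expA, efD by auto. unfold gD. rewrite !exp_ln by auto. field. nz. }
    assert (E2 : exp (- fD (z - x) - gD (b - x) + gD (x - y)) =
                 (1 + 1 / (z - x)) / (b - x) * (x - y)).
    { rewrite expB, efD by auto. unfold gD. rewrite !exp_ln by auto. field. nz. }
    assert (T1 : y - b + (x - b) / (x - a) = - (x - y) * (1 + exp (- fD (x - a) + gD (b - x) - gD (x - y)))).
    { rewrite E1. field. nz. }
    assert (T2 : y - b + (x - y) / (x - z) = - (b - x) * (1 + exp (- fD (z - x) - gD (b - x) + gD (x - y)))).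
    { rewrite E2. field. nz. }
    pose proof (exp_pos (- fD (x - a) + gD (b - x) - gD (x - y))) as P1.
    pose proof (exp_pos (- fD (z - x) - gD (b - x) + gD (x - y))) as P2.
    set (e1 := exp (- fD (x - a) + gD (b - x) - gD (x - y))) in *.
    set (e2 := exp (- fD (z - x) - gD (b - x) + gD (x - y))) in *.
    assert (n1 : 1 + e1 <> 0) by lra. assert (n2 : 1 + e2 <> 0) by lra.
    split.
    + unfold tgtD_dom. rewrite T1, T2. nz.
    + unfold star_rhs, tgtD_rhs, bD. fold e1 e2. rewrite T1, T2.
      clearbody e1 e2. field. nz.
Qed.

Lemma em p q : exp (- (p - q)) = exp q / exp p.
Proof. rewrite exp_Ropp. unfold Rminus, Rdiv. rewrite exp_plus, exp_Ropp. field; split; apply Rgt_not_eq, exp_pos. Qed.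
Lemma ed p q : exp (p - q) = exp p / exp q.
Proof. unfold Rminus, Rdiv. rewrite exp_plus, exp_Ropp. auto. Qed.
Lemma expnA p q r : exp (- (- p + q - r)) = exp p / exp q * exp r.
Proof. replace (- (- p + q - r)) with (p - q + r) by ring. unfold Rminus, Rdiv. rewrite !exp_plus, !exp_Ropp. ring. Qed.
Lemma expnB p q r : exp (- (- p - q + r)) = exp p * exp q / exp r.
Proof. replace (- (- p - q + r)) with (p + q - r) by ring. unfold Rminus, Rdiv. rewrite !exp_plus, !exp_Ropp. ring. Qed.
Lemma exp_injective : forall x y, exp x = exp y -> x = y.
Proof. exact exp_inv. Qed.
Lemma subnz p q : 0 < q -> 0 < p / q - 1 -> p - q <> 0.
Proof. intros Hq H. apply (divnum _ q). replace ((p - q) / q) with (p / q - 1) by (field; lra). auto. Qed.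

Lemma caseF :
  point_equiv (star_dom fF gF DfF DgF DbF) 1 (star_rhs fF gF bF)
              tgtF_dom 1 tgtF_rhs.
Proof.
  apply (pe_gen _ _ _ _ _ exp exp (-1)).
  - lra.
  - exact exp_injective.
  - intros; auto_derive; auto. ring.
  - intros; apply Rgt_not_eq, exp_pos.
  - intros a b x y z HD. unfold star_dom, DfF, DgF, DbF in HD.
    destruct HD as (h1&h2&h3&h4&_&_).
    unfold tgtF_dom, tgtF_rhs, star_rhs, bF. rewrite expnA, expnB.
    unfold fF, gF. rewrite !exp_ln by auto.
    rewrite !em, !ed in *.
    pose proof (exp_pos a) as pA. pose proof (exp_pos b) as pB. pose proof (exp_pos x) as pX.
    pose proof (exp_pos y) as pY. pose proof (exp_pos z) as pZ.
    set (A := exp a) in *. set (B := exp b) in *. set (X := exp x) in *.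
    set (Y := exp y) in *. set (Z := exp z) in *. clearbody A B X Y Z.
    assert (n1 := subnz _ _ pX h1). assert (n2 := subnz _ _ pZ h2).
    assert (n3 := subnz _ _ pX h3). assert (n4 := subnz _ _ pY h4).
    assert (X <> 0) by lra. assert (Y <> 0) by lra. assert (Z <> 0) by lra.
    split.
    + repeat split; auto; lra.
    + field. nz.
Qed.

Lemma caseH :
  point_equiv (star_dom fH gH DfH DgH DbH) 1 (star_rhs fH gH bH)
              tgtH_dom 1 tgtH_rhs.
Proof.
  apply (pe_gen _ _ _ _ _ exp exp (-1)).
  - lra.
  - exact exp_injective.
  - intros; auto_derive; auto. ring.
  - intros; apply Rgt_not_eq, exp_pos.
  - intros a b x y z HD. unfold star_dom, DfH, DgH, DbH in HD.
    destruct HD as (h1&h2&h3&h4&_&_).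
    unfold tgtH_dom, tgtH_rhs, star_rhs, bH. rewrite expnA, expnB.
    unfold fH, gH. rewrite !exp_ln by auto.
    rewrite !em, !ed in *.
    pose proof (exp_pos a) as pA. pose proof (exp_pos b) as pB. pose proof (exp_pos x) as pX.
    pose proof (exp_pos y) as pY. pose proof (exp_pos z) as pZ.
    set (A := exp a) in *. set (B := exp b) in *. set (X := exp x) in *.
    set (Y := exp y) in *. set (Z := exp z) in *. clearbody A B X Y Z.
    assert (n1 := subnz _ _ pX h1). assert (n2 := subnz _ _ pZ h2).
    assert (q3 : 0 < B / X) by (apply Rdiv_lt_0_compat; auto).
    assert (q4 : 0 < X / Y) by (apply Rdiv_lt_0_compat; auto).
    assert (X <> 0) by lra. assert (Y <> 0) by lra. assert (Z <> 0) by lra.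
    assert (X + Y <> 0) by lra. assert (B + X <> 0) by lra.
    split.
    + repeat split; auto; lra.
    + field. nz.
Qed.

Ltac scl2 H k := match goal with |- ?e <> 0 => let Hc := fresh in intro Hc; apply H;
   transitivity (e / k); [field; nz | rewrite Hc; unfold Rdiv; ring] end.

Lemma caseI_main gam : gam <> 0 -> gam ^ 2 <> 1 ->
  point_equiv (star_dom (fI gam) (gI gam) (DfI gam) (DgI gam) DbI) 1
              (star_rhs (fI gam) (gI gam) bI)
              (tgtI_dom gam) (- (1 / (1 + gam ^ 2))) (tgtI_rhs gam).
Proof.
  intros Hg Hg1.
  assert (Hg2 : 1 + gam ^ 2 <> 0) by nra.
  assert (Hg3 : 1 - gam ^ 2 <> 0) by lra.
  apply (pe_gen _ _ _ _ _ exp exp ((gam ^ 4 - 1) / gam ^ 2)).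
  - replace (gam ^ 4 - 1) with ((gam ^ 2 - 1) * (1 + gam ^ 2)) by ring.
    unfold Rdiv. repeat apply Rmult_integral_contrapositive_currified; auto.
    lra. apply Rinv_neq_0_compat. apply pow_nonzero; auto.
  - exact exp_injective.
  - intros; auto_derive; auto. ring.
  - intros; apply Rgt_not_eq, exp_pos.
  - intros a b x y z HD. unfold star_dom, DfI, DgI, DbI in HD.
    destruct HD as ((h1a&h1b)&(h2a&h2b)&(h3a&h3b)&(h4a&h4b)&h5&h6).
    pose proof (divnum _ _ h1b) as h1c. pose proof (divnum _ _ h2b) as h2c.
    pose proof (divnum _ _ h3b) as h3c. pose proof (divnum _ _ h4b) as h4c.
    assert (E1 : exp (- fI gam (x - a) + gI gam (b - x) - gI gam (x - y)) =
       / ((/ gam ^ 2 * exp (x - a) - 1) / (exp (x - a) - / gam ^ 2))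
       * ((gam * exp (b - x) - 1) / (exp (b - x) - gam))
       / ((gam * exp (x - y) - 1) / (exp (x - y) - gam))).
    { rewrite expA. unfold fI, gI. rewrite !exp_ln by auto. reflexivity. }
    assert (E2 : exp (- fI gam (z - x) - gI gam (b - x) + gI gam (x - y)) =
       / ((/ gam ^ 2 * exp (z - x) - 1) / (exp (z - x) - / gam ^ 2))
       / ((gam * exp (b - x) - 1) / (exp (b - x) - gam))
       * ((gam * exp (x - y) - 1) / (exp (x - y) - gam))).
    { rewrite expB. unfold fI, gI. rewrite !exp_ln by auto. reflexivity. }
    unfold tgtI_dom, tgtI_rhs, star_rhs, bI.
    set (e1 := exp (- fI gam (x - a) + gI gam (b - x) - gI gam (x - y))) in *.
    set (e2 := exp (- fI gam (z - x) - gI gam (b - x) + gI gam (x - y))) in *.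
    clearbody e1 e2.
    rewrite !ed in *.
    pose proof (exp_pos a) as pA. pose proof (exp_pos b) as pB. pose proof (exp_pos x) as pX.
    pose proof (exp_pos y) as pY. pose proof (exp_pos z) as pZ.
    set (A := exp a) in *. set (B := exp b) in *. set (X := exp x) in *.
    set (Y := exp y) in *. set (Z := exp z) in *. clearbody A B X Y Z.
    assert (A <> 0) by lra. assert (B <> 0) by lra. assert (X <> 0) by lra.
    assert (Y <> 0) by lra. assert (Z <> 0) by lra.
    assert (k1 : gam ^ 2 * X - A <> 0) by scl2 h1a (gam ^ 2 * A).
    assert (k2 : X - gam ^ 2 * A <> 0) by scl2 h1c (gam ^ 2 * A).
    assert (k3 : gam ^ 2 * Z - X <> 0) by scl2 h2a (gam ^ 2 * X).
    assert (k4 : Z - gam ^ 2 * X <> 0) by scl2 h2c (gam ^ 2 * X).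
    assert (k5 : B - gam * X <> 0) by scl2 h3a X.
    assert (k6 : gam * B - X <> 0) by scl2 h3c X.
    assert (k7 : X - gam * Y <> 0) by scl2 h4a Y.
    assert (k8 : gam * X - Y <> 0) by scl2 h4c Y.
    assert (D2 : tgtI_den2 gam A B X Y = (X - gam ^ 2 * A) * (B - gam * X) * (gam * X - Y) * (e1 - 1) / ((1 - gam ^ 2) * X)).
    { rewrite E1. unfold tgtI_den2. field. nz. }
    assert (D1 : tgtI_den1 gam B X Y Z = (Z - gam ^ 2 * X) * (gam * B - X) * (X - gam * Y) * (e2 - 1) / ((1 - gam ^ 2) * X)).
    { rewrite E2. unfold tgtI_den1. field. nz. }
    rewrite D1, D2. clear D1 D2 E1 E2.
    split.
    + split; unfold Rdiv; repeat apply Rmult_integral_contrapositive_currified; auto;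
      apply Rinv_neq_0_compat; nz.
    + field. nz.
Qed.

Lemma caseI_deg gam : gam ^ 2 = 1 ->
  point_equiv (star_dom (fI gam) (gI gam) (DfI gam) (DgI gam) DbI) 1
              (star_rhs (fI gam) (gI gam) bI)
              (tgtI_dom gam) (- (1 / (1 + gam ^ 2))) (tgtI_rhs gam).
Proof.
  intros Hg.
  apply (pe_gen _ _ _ _ _ exp exp 1).
  - lra.
  - exact exp_injective.
  - intros; auto_derive; auto. ring.
  - intros; apply Rgt_not_eq, exp_pos.
  - intros a b x y z HD. exfalso. unfold star_dom, DfI, DgI, DbI in HD.
    destruct HD as ((h1a&h1b)&(h2a&h2b)&(h3a&h3b)&(h4a&h4b)&h5&h6).
    assert (Hc : gam = 1 \/ gam = -1) by (destruct (Req_dec gam 1); [left; auto| right; nra]).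
    destruct Hc as [-> | ->].
    + assert (F : forall p, exp p - / 1 ^ 2 <> 0 -> fI 1 p = 0).
      { intros p Hp. unfold fI. replace ((/ 1 ^ 2 * exp p - 1) / (exp p - / 1 ^ 2)) with 1.
        apply ln_1. field. replace (exp p - 1) with (exp p - / 1 ^ 2) by field. exact Hp. }
      assert (G : forall p, exp p - 1 <> 0 -> gI 1 p = 0).
      { intros p Hp. unfold gI. replace ((1 * exp p - 1) / (exp p - 1)) with 1.
        apply ln_1. field. exact Hp. }
      rewrite (F _ h1a), (G _ h3a), (G _ h4a) in h5.
      apply h5. replace (- 0 + 0 - 0) with 0 by ring. rewrite exp_0. ring.
    + pose proof (exp_pos (b - x)).
      replace ((-1 * exp (b - x) - 1) / (exp (b - x) - -1)) with (-1) in h3b by (field; lra).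
      lra.
Qed.

Theorem mainTheorem4 :
  forall gam : R, gam <> 0 ->
  (* Case (A) *)
  point_equiv (star_dom (fA gam) (gA gam) DA DA DA) 1 (star_rhs (fA gam) (gA gam) bA)
              tgtA_dom (1 / 2) tgtA_rhs /\
  (* Case (C) *)
  point_equiv (star_dom (fC gam) (gC gam) (DfC gam) (DgC gam) DbC) 1
              (star_rhs (fC gam) (gC gam) bC)
              tgtC_dom (1 / 4) tgtC_rhs /\
  (* Case (D) *)
  point_equiv (star_dom fD gD DfD DgD DbD) 1 (star_rhs fD gD bD)
              tgtD_dom 1 tgtD_rhs /\
  (* Case (F) *)
  point_equiv (star_dom fF gF DfF DgF DbF) 1 (star_rhs fF gF bF)
              tgtF_dom 1 tgtF_rhs /\
  (* Case (H) at parameter 0 *)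
  point_equiv (star_dom fH gH DfH DgH DbH) 1 (star_rhs fH gH bH)
              tgtH_dom 1 tgtH_rhs /\
  (* Case (I) *)
  point_equiv (star_dom (fI gam) (gI gam) (DfI gam) (DgI gam) DbI) 1
              (star_rhs (fI gam) (gI gam) bI)
              (tgtI_dom gam) (- (1 / (1 + gam ^ 2))) (tgtI_rhs gam).
Proof.
  intros gam Hg.
  split; [apply caseA; auto|].
  split; [apply caseC; auto|].
  split; [apply caseD|].
  split; [apply caseF|].
  split; [apply caseH|].
  destruct (Req_dec (gam ^ 2) 1) as [E|E].
  - apply caseI_deg; auto.
  - apply caseI_main; auto.
Qed.
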